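(* Let $A$ be a division ring and let $R=A[x]$ be the polynomial ring over $A$ in a central indeterminate $x$. If $R$ is right quasi-invariant, then $A$ is a field.
   Context: All rings are associative, unital and non-zero. A ring is right quasi-invariant if every maximal right ideal of it is a two-sided ideal. *)

(* Defs.v *)
From HB Require Import structures.
From mathcomp Require Import all_boot all_order all_algebra.
Set Implicit Arguments. Unset Strict Implicit. Unset Printing Implicit Defensive.
Import GRing.Theory.
Local Open Scope ring_scope.

Definition right_ideal (R : nzRingType) (I : R -> Prop) : Prop :=
  [/\ I 0, (forall a b, I a -> I b -> I (a - b)) & (forall a r, I a -> I (a * r))].

Definition two_sided_ideal (R : nzRingType) (I : R -> Prop) : Prop :=
  right_ideal I /\ (forall r a, I a -> I (r * a)).

Definition maximal_right_ideal (R : nzRingType) (I : R -> Prop) : Prop :=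
  [/\ right_ideal I, ~ I 1 &
      forall J : R -> Prop, right_ideal J -> ~ J 1 ->
        (forall a, I a -> J a) -> forall a, J a -> I a].

Definition right_quasi_invariant (R : nzRingType) : Prop :=
  forall I : R -> Prop, maximal_right_ideal I -> two_sided_ideal I.

Definition division_ring (A : unitRingType) : Prop :=
  forall a : A, a != 0 -> a \is a GRing.unit.

(* Main.v *)
Require Import Defs.
From HB Require Import structures.
From mathcomp Require Import all_boot all_order all_algebra.
Local Open Scope ring_scope.
Import GRing.Theory.

Lemma constXsub (A : unitRingType) (a c : A) (q : {poly A}) :
  c%:P = ('X - a%:P) * q -> c = 0.
Proof.
move=> E; have [q0|qn0] := eqVneq q 0.
  by move: E; rewrite q0 mulr0 => /polyC_inj.
have := size_polyC_leq1 c; rewrite E size_monicM ?monicXsubC // size_XsubC.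
rewrite -size_poly_eq0 in qn0.
by case: (size q) qn0.
Qed.

Lemma divXsub (A : unitRingType) (a : A) (f : {poly A}) :
  exists q, exists c, f = ('X - a%:P) * q + c%:P.
Proof.
elim/poly_ind: f => [|p d [q [c ->]]].
  by exists 0, 0; rewrite mulr0 add0r.
exists (q * 'X + c%:P), (a * c + d).
rewrite mulrDl -mulrA.
have -> : c%:P * 'X = ('X - a%:P) * c%:P + (a * c)%:P.
  by rewrite (commr_polyX c%:P) polyCM mulrBl subrK.
by rewrite polyCD mulrDr !addrA.
Qed.

Theorem lemma2p1 (A : unitRingType) :
  division_ring A -> right_quasi_invariant {poly A} ->
  forall a b : A, a * b = b * a.
Proof.
move=> divA rqi a b.
pose d := 'X - a%:P.
pose I := fun f : {poly A} => exists q, f = d * q.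
have rI : right_ideal I.
  split; first by exists 0; rewrite mulr0.
    by move=> x y [q ->] [r ->]; exists (q - r); rewrite mulrBr.
  by move=> x r [q ->]; exists (q * r); rewrite mulrA.
have mI : maximal_right_ideal I.
  split => //.
    by move=> [q /esym]; rewrite -polyC1 => /esym /constXsub /eqP; rewrite oner_eq0.
  move=> J [J0 JB JM] nJ1 IJ f Jf.
  have [q [c Ef]] := divXsub _ a f.
  have Jc : J c%:P.
    have -> : c%:P = f - d * q by rewrite Ef addrC addKr.
    by apply: JB => //; apply: IJ; exists q.
  have [c0|cn0] := eqVneq c 0.
    by exists q; rewrite Ef c0 addr0.
  exfalso; apply: nJ1.
  have := JM _ (c^-1)%:P Jc; rewrite -polyCM mulrV ?polyC1 //.
  exact: divA.
have [[_ IB IM] IL] := rqi I mI.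
have Ic : I (a * b - b * a)%:P.
  have -> : (a * b - b * a)%:P = b%:P * d - d * b%:P.
    rewrite /d mulrBr mulrBl (commr_polyX b%:P) -!polyCM polyCB.
    by rewrite opprB addrA (addrAC _ _ (- ('X * b%:P))) (addrAC ('X * b%:P)) subrr add0r addrC.
  apply: IB; first by apply: IL; exists 1; rewrite mulr1.
  by exists b%:P.
have [q Eq] := Ic.
by apply/eqP; rewrite -subr_eq0; apply/eqP; exact: constXsub Eq.
Qed.
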